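(* Let $X$ be a real normed space and $\mathcal M=\{M_1,\dots,M_n\}$ a finite family of nonempty closed bounded convex subsets of $X$, with $\Sigma(\mathcal M)\neq\emptyset$ and $d=(d_1,\dots,d_n)\in\Omega(\mathcal M)$. Then for every $K\in\Sigma_d(\mathcal M)$ there exists $i$ with $d_i=\sup_{x\in M_i}|x\,K|$.
   Context: For $p\in X$ and $A\subset X$: $|p\,A|=\inf_{a\in A}|p\,a|$ ($=\infty$ if $A=\emptyset$). For nonempty $A,B$, $d_H(A,B)=\max\{\sup_{a\in A}|a\,B|,\sup_{b\in B}|b\,A|\}\in[0,\infty]$. Let $\mathcal P^f_{\mathrm{Cl}}(X)$ be the set of all nonempty closed $Y\subset X$ with $d_H(Y,M_1)<\infty$ (the finiteness class of the $M_i$). $S_{\mathcal M}(Y)=\sum_i d_H(Y,M_i)$; $\Sigma(\mathcal M)$ is the set of minimizers of $S_{\mathcal M}$ over $\mathcal P^f_{\mathrm{Cl}}(X)$; for $K\in\Sigma(\mathcal M)$, $d(K)=(d_H(K,M_1),\dots,d_H(K,M_n))$; $\Omega(\mathcal M)=\{d(K):K\in\Sigma(\mathcal M)\}$; for $d\in\Omega(\mathcal M)$, $\Sigma_d(\mathcal M)=\{K\in\Sigma(\mathcal M):d(K)=d\}$. *)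

(* Defs.v *)
From HB Require Import structures.
From mathcomp Require Import all_boot all_order all_algebra.
From mathcomp Require Import all_classical all_reals all_analysis.
Set Implicit Arguments. Unset Strict Implicit. Unset Printing Implicit Defensive.
Import Order.TTheory GRing.Theory Num.Theory.
Import numFieldNormedType.Exports.
Local Open Scope classical_set_scope.
Local Open Scope ring_scope.
Local Open Scope ereal_scope.

Section Hausdorff.
Context {R : realType} {X : normedModType R}.

(* |p A| = inf_{a in A} |p - a|, equal to +oo when A is empty *)
Definition dist_pt (p : X) (A : set X) : \bar R :=
  ereal_inf [set (`|p - a|)%:E | a in A].

Definition hausdorff (A B : set X) : \bar R :=
  maxe (ereal_sup [set dist_pt a B | a in A])
       (ereal_sup [set dist_pt b A | b in B]).

Definition PfCl (M1 : set X) : set (set X) :=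
  [set Y | Y !=set0 /\ closed Y /\ hausdorff Y M1 < +oo].

Variable n : nat.
Variable M : 'I_n -> set X.
Variable M1 : set X. (* the first member of the family *)

Definition S_M (Y : set X) : \bar R := \sum_(i < n) hausdorff Y (M i).

Definition Sigma : set (set X) :=
  [set K | PfCl M1 K /\ forall Y, PfCl M1 Y -> S_M K <= S_M Y].

Definition dvec (K : set X) : 'I_n -> \bar R := fun i => hausdorff K (M i).

Definition Omega : set ('I_n -> \bar R) := [set dvec K | K in Sigma].

Definition Sigma_d (d : 'I_n -> \bar R) : set (set X) :=
  [set K | Sigma K /\ dvec K = d].

End Hausdorff.

(* Main.v *)
Set Warnings "-all".
Require Import Defs.
From HB Require Import structures.
From mathcomp Require Import all_boot all_order all_algebra.
From mathcomp Require Import all_classical all_reals all_analysis.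
From mathcomp Require Import lra.
Import Order.TTheory GRing.Theory Num.Theory.
Import numFieldNormedType.Exports.
Local Open Scope classical_set_scope.
Local Open Scope ring_scope.

Section Aux.
Context {R : realType} {X : normedModType R}.

Lemma cvx (A : set X) (hA : @convex_set R X A) (x y : X) (t : R) :
  0 <= t -> t <= 1 -> A x -> A y -> A (t *: x + (1 - t) *: y).
Proof.
move=> t0 t1 Ax Ay.
have := hA x y (Itv01 t0 t1); rewrite !inE => /(_ Ax Ay).
by [].
Qed.

Lemma dist_ge0 (x : X) A : (0 <= dist_pt x A)%E.
Proof. by apply: le_ereal_inf_tmp => _ [a _ <-]; rewrite lee_fin. Qed.

Lemma dist_le (x : X) A a : A a -> (dist_pt x A <= (`|x - a|)%:E)%E.
Proof. by move=> Aa; apply: ereal_inf_lbound; exists a. Qed.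

Arguments dist_le x {A a}.
Definition dr (x : X) A := fine (dist_pt x A).

Lemma drE (x : X) A : A !=set0 -> dist_pt x A = (dr x A)%:E.
Proof.
move=> [a Aa]; rewrite /dr fineK// ge0_fin_numE ?dist_ge0//.
have := dist_le x Aa; move/le_lt_trans; apply; exact: ltry.
Qed.

Lemma dr_ge0 (x : X) A : 0 <= dr x A.
Proof. by rewrite /dr fine_ge0 ?dist_ge0. Qed.

Lemma dr_le (x : X) A a : A a -> dr x A <= `|x - a|.
Proof. by move=> Aa; rewrite -lee_fin -drE ?dist_le//; exists a. Qed.
Arguments dr_le x {A a}.


Lemma dr_ge (x : X) A c : A !=set0 -> (forall a, A a -> c <= `|x - a|) -> c <= dr x A.
Proof.
move=> An H; rewrite -lee_fin -drE//; apply: le_ereal_inf_tmp => _ [a Aa <-].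
by rewrite lee_fin H.
Qed.

Lemma dr_lt (x : X) A c : A !=set0 -> dr x A < c -> exists2 a, A a & `|x - a| < c.
Proof.
move=> An H; apply: contrapT => H'.
suff : c <= dr x A by rewrite leNgt H.
apply: dr_ge => // a Aa; rewrite leNgt; apply/negP => h; apply: H'; by exists a.
Qed.

Lemma dr_cvx A (hA : @convex_set R X A) (An : A !=set0) (k p : X) (s : R) :
  0 <= s -> s <= 1 ->
  dr (s *: k + (1 - s) *: p) A <= s * dr k A + (1 - s) * dr p A.
Proof.
move=> s0 s1; rewrite leNgt; apply/negP => H.
set e := (dr (s *: k + (1 - s) *: p) A - (s * dr k A + (1 - s) * dr p A)) / 2.
have e0 : 0 < e by rewrite /e divr_gt0// subr_gt0.
have [m1 Am1 h1] : exists2 m1, A m1 & `|k - m1| < dr k A + e.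
  by apply: dr_lt => //; rewrite ltrDl.
have [m2 Am2 h2] : exists2 m2, A m2 & `|p - m2| < dr p A + e.
  by apply: dr_lt => //; rewrite ltrDl.
have Am := @cvx A hA m1 m2 s s0 s1 Am1 Am2.
have h3 := dr_le (s *: k + (1 - s) *: p) Am.
have h4 : `|s *: k + (1 - s) *: p - (s *: m1 + (1 - s) *: m2)|
   <= s * `|k - m1| + (1 - s) * `|p - m2|.
  have -> : s *: k + (1 - s) *: p - (s *: m1 + (1 - s) *: m2)
     = s *: (k - m1) + (1 - s) *: (p - m2).
    by rewrite !scalerBr opprD !addrA; congr (_ + _); rewrite addrAC.
  apply: le_trans (ler_normD _ _) _.
  by rewrite !normrZ !ger0_norm ?subr_ge0.
have h5 : s * `|k - m1| <= s * (dr k A + e) by rewrite ler_wpM2l// ltW.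
have h6 : (1 - s) * `|p - m2| <= (1 - s) * (dr p A + e).
  by rewrite ler_wpM2l ?subr_ge0// ltW.
have : dr (s *: k + (1 - s) *: p) A <= s * dr k A + (1 - s) * dr p A + e.
  apply: (le_trans h3); apply: (le_trans h4).
  have -> : s * dr k A + (1 - s) * dr p A + e = s * (dr k A + e) + (1 - s) * (dr p A + e).
    by rewrite !mulrDr addrACA -mulrDl subrKC mul1r.
  exact: lerD.
move=> h.
have he : e * 2 = dr (s *: k + (1 - s) *: p) A - (s * dr k A + (1 - s) * dr p A).
  by rewrite /e divfK.
move: h he e0; clearbody e.
set u := dr _ A. set v := s * _ + _. move=> h he e0. lra.
Qed.

Lemma bnd (A : set X) : bounded_set A -> exists r, forall x, A x -> `|x| <= r.
Proof.
move=> [r [_ Hr]].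
exists (r + 1) => x Ax. apply: (Hr (r+1)) => //. rewrite ltrDl//.
Qed.
Arguments bnd {A}.

Definition esup (A B : set X) := ereal_sup [set dist_pt a B | a in A].

Lemma esup_ub (A B : set X) a : A a -> (dist_pt a B <= esup A B)%E.
Proof. by move=> Aa; apply: ereal_sup_ubound; exists a. Qed.
Arguments esup_ub {A} B {a}.

Lemma esup_le (A B : set X) c : (forall a, A a -> dist_pt a B <= c)%E -> (esup A B <= c)%E.
Proof. by move=> H; apply: ge_ereal_sup => _ [a Aa <-]; exact: H. Qed.

Lemma esup_ge0 (A B : set X) : A !=set0 -> (0 <= esup A B)%E.
Proof. by move=> [a Aa]; apply: (le_trans (dist_ge0 a B)); exact: esup_ub. Qed.

Lemma hausE (A B : set X) : hausdorff A B = maxe (esup A B) (esup B A).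
Proof. by []. Qed.

Lemma maxe_neq (x y : \bar R) : maxe x y <> y -> (y < x)%E /\ maxe x y = x.
Proof.
rewrite maxEle; case: ifP => // /negbT; rewrite -ltNge => h _; by split.
Qed.

Lemma posmin n (f : 'I_n -> R) : (forall j, 0 < f j) -> exists2 c, 0 < c & forall j, c <= f j.
Proof.
move=> H; exists (\big[Order.min/1]_j f j).
  by elim/big_ind: _ => // x y; rewrite lt_min => -> ->.
by move=> j; rewrite (bigD1 j) //= ge_min lexx.
Qed.

End Aux.
Arguments dist_le {R X} x {A a}.
Arguments dr_le {R X} x {A a}.
Arguments bnd {R X A}.
Arguments dr_lt {R X} x {A c}.
Arguments esup_ub {R X A} B {a}.

Theorem mainTheorem18 (R : realType) (X : normedModType R) (n : nat)
  (hn : (0 < n)%N) (M : 'I_n -> set X)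
  (hne : forall i, M i !=set0) (hcl : forall i, closed (M i))
  (hbd : forall i, bounded_set (M i)) (hcv : forall i, @convex_set R X (M i))
  (hSigma : Sigma M (M (Ordinal hn)) !=set0)
  (d : 'I_n -> \bar R) (hd : Omega M (M (Ordinal hn)) d) :
  forall K, Sigma_d M (M (Ordinal hn)) d K ->
  exists i : 'I_n, d i = ereal_sup [set dist_pt x K | x in M i].
Proof.
move=> K [[[Kn [Kcl KM1]] Hmin] HdK].
set i0 := Ordinal hn.
rewrite -HdK /dvec.
apply: contrapT => Hno.
have Hne : forall j, hausdorff K (M j) <> esup (M j) K.
  by move=> j h; apply: Hno; exists j.
have HA j : (esup (M j) K < esup K (M j))%E /\ hausdorff K (M j) = esup K (M j).
  exact: maxe_neq (Hne j).
have [r0 Hr0] := bnd (hbd i0).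
have A0fin : esup K (M i0) = (fine (esup K (M i0)))%:E.
  rewrite fineK// ge0_fin_numE ?esup_ge0//.
  by rewrite -(proj2 (HA i0)).
set al := fine (esup K (M i0)).
have [rho Hrho] : exists rho, forall k, K k -> `|k| <= rho.
  exists (r0 + (al + 1)) => k Kk.
  have h1 : dr k (M i0) < al + 1.
    have : (dist_pt k (M i0) <= al%:E)%E by rewrite -A0fin esup_ub.
    by rewrite drE ?hne// lee_fin => h; apply: le_lt_trans h _; rewrite ltrDl.
  have [m Mm hm] := dr_lt k (hne i0) h1.
  have -> : k = m + (k - m) by rewrite addrC subrK.
  apply: le_trans (ler_normD _ _) _; apply: lerD; [exact: Hr0 | exact: ltW].
have Afin j : esup K (M j) = (fine (esup K (M j)))%:E.
  have [rj Hrj] := bnd (hbd j). have [mj Mmj] := hne j.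
  rewrite fineK// ge0_fin_numE ?esup_ge0//.
  apply: (@le_lt_trans _ _ (rho + rj)%:E); last by rewrite ltry.
  apply: esup_le => k Kk; apply: le_trans (dist_le k Mmj) _; rewrite lee_fin.
  apply: le_trans (ler_normB _ _) _; apply: lerD; [exact: Hrho | exact: Hrj].
have Bfin j : esup (M j) K = (fine (esup (M j) K))%:E.
  rewrite fineK// ge0_fin_numE ?esup_ge0//.
  apply: lt_trans (proj1 (HA j)) _; by rewrite Afin ltry.
set a := fun j => fine (esup K (M j)).
set b := fun j => fine (esup (M j) K).
have hab j : b j < a j by rewrite -lte_fin /a /b -Afin -Bfin; exact: (proj1 (HA j)).
have hka j k : K k -> dr k (M j) <= a j.
  by move=> Kk; rewrite -lee_fin -drE ?hne// /a -Afin; exact: esup_ub.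
have hxb j x : M j x -> dr x K <= b j.
  by move=> Mx; rewrite -lee_fin -drE// /b -Bfin; exact: esup_ub.
have [x Mx] := hne i0.
have hx : dr x K < a i0 by apply: le_lt_trans (hxb _ _ Mx) (hab i0).
have [p Kp hp] := dr_lt x Kn hx.
have gp : dr p (M i0) < a i0.
  by apply: le_lt_trans (dr_le p Mx) _; rewrite distrC.
have [c c0 hc] := @posmin _ n (fun j => a j - b j) (fun j => ltac:(by rewrite subr_gt0 hab)).
have rho0 : 0 <= rho by apply: le_trans (normr_ge0 p) (Hrho p Kp).
set D := rho + rho.
have hD k : K k -> `|k - p| <= D.
  by move=> Kk; apply: le_trans (ler_normB _ _) _; apply: lerD; apply: Hrho.
set c' := Order.min c 1.
have c'0 : 0 < c' by rewrite lt_min c0 ltr01.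
have c'1 : c' <= 1 by rewrite ge_min lexx orbT.
have c'c : c' <= c by rewrite ge_min lexx.
set t := c' / (2 * (D + 1)).
have D1 : 0 < 2 * (D + 1) by rewrite /D; lra.
have ht : t * (2 * (D + 1)) = c' by rewrite /t divfK// gt_eqF.
have t0 : 0 < t by rewrite /t divr_gt0.
have D0 : 0 <= D by rewrite /D; lra.
clearbody t D c'.
have t1 : t < 1 by nra.
have tD : t * D < c by nra.
set Y := [set (1 - t) *: k + t *: p | k in K].
have Yn : Y !=set0 by exists ((1 - t) *: p + t *: p); exists p.
set e := fun j => Num.max ((1 - t) * a j + t * dr p (M j)) (b j + t * D).
have HY j : (hausdorff Y (M j) <= (e j)%:E)%E.
  rewrite hausE ge_max; apply/andP; split.
  - apply: esup_le => _ [k Kk <-]; rewrite drE ?hne// lee_fin.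
    have e1 : 1 - (1 - t) = t by rewrite opprB addrC subrK.
    have s0 : 0 <= 1 - t by rewrite subr_ge0 ltW.
    have s1 : 1 - t <= 1 by rewrite lerBlDr lerDl ltW.
    have := @dr_cvx _ _ (M j) (hcv j) (hne j) k p (1 - t) s0 s1; rewrite e1 => h.
    apply: (le_trans h); rewrite le_max; apply/orP; left.
    by rewrite lerD2r ler_wpM2l // hka.
  - apply: esup_le => y My; rewrite drE// lee_fin.
    rewrite le_max; apply/orP; right.
    have : dr y Y - t * D <= dr y K.
      apply: dr_ge => // k Kk.
      have Yk : Y ((1 - t) *: k + t *: p) by exists k.
      have h1 := dr_le y Yk.
      have h2 : `|y - ((1 - t) *: k + t *: p)| <= `|y - k| + t * D.
        have -> : y - ((1 - t) *: k + t *: p) = (y - k) + t *: (k - p).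
          by rewrite scalerBl scale1r scalerBr opprD opprB !addrA (addrAC y).
        apply: le_trans (ler_normD _ _) _; rewrite lerD2l normrZ gtr0_norm//.
        by apply: ler_wpM2l; [exact: ltW | exact: hD].
      by rewrite lerBlDr; apply: le_trans h1 h2.
    have := hxb j y My; lra.
have hea j : e j <= a j.
  rewrite /e ge_max; apply/andP; split.
  - have := hka j p Kp; have := hc j; nra.
  - have := hc j; nra.
have he0 : e i0 < a i0.
  rewrite /e gt_max; apply/andP; split.
  - move: gp; nra.
  - have := hc i0; nra.
have PY : PfCl (M i0) Y.
  split; first exact: Yn.
  split; last by apply: le_lt_trans (HY i0) _; rewrite ltry.
  have t1' : 1 - t != 0 by rewrite subr_eq0 gt_eqF.
  have -> : Y = (fun y => (1 - t)^-1 *: (y - t *: p)) @^-1` K.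
    apply/seteqP; split.
    - move=> _ [k Kk <-]; rewrite /preimage /=.
      by rewrite addrK scalerA mulVf // scale1r.
    - move=> y Ky; exists ((1 - t)^-1 *: (y - t *: p)) => //.
      by rewrite scalerA divff // scale1r subrK.
  apply: closed_comp => // y _.
  apply: (continuous_comp (f := fun y => y - t *: p)); last exact: scaler_continuous.
  by apply: continuousB; [exact: cvg_id | exact: cvg_cst].
have SK : S_M M K = (\sum_j a j)%:E.
  rewrite /S_M -sumEFin; apply: eq_bigr => j _.
  by rewrite (proj2 (HA j)) Afin.
have SY : (S_M M Y <= (\sum_j e j)%:E)%E.
  by rewrite /S_M -sumEFin; apply: lee_sum => j _; exact: HY.
have hlt : \sum_j e j < \sum_j a j.
  rewrite (bigD1 i0) // [X in _ < X](bigD1 i0) //=.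
  by apply: ltr_leD => //; apply: ler_sum => j _; exact: hea.
have := Hmin Y PY; rewrite SK => h.
have := le_trans h SY; rewrite lee_fin leNgt hlt //.
Qed.
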